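(* For every prime $p$: (i) $\{(r,e,d)\in\mathscr{U}(p)\mid p\mid r,\ \det M_d((x^r-x-1)^e)\ne0\}=\{(r,e,d)\in\mathscr{B}(p)\mid p\mid r\}$; (ii) $\{(r,e,d)\in\mathscr{U}(p)\mid p<r,\ p\nmid r,\ \det M_d((x^r-1)^e)\ne0\}=\{(r,e,d)\in\mathscr{B}(p)\mid p<r,\ p\nmid r\}$; (iii) $\{(r,e,d)\in\mathscr{U}(p)\mid 2\le r\le p-1,\ r\nmid p-1,\ \det M_d((x^r-1)^e)\ne0\}=\{(r,e,d)\in\mathscr{B}(p)\mid 2\le r\le p-1,\ r\nmid p-1\}$.
   Context: Let $p$ be a prime. For a polynomial $h(x)\in\mathbb{F}_p[x]$ and integers $e\ge0$, $0\le d\le p$, write $h(x)^e=\sum_{i\ge0}c_ix^i$ ($c_i=0$ for $i<0$) and let $M_d(h(x)^e)$ be the $d\times d$ matrix with $(i,j)$ entry $c_{ip+j-d-1}$; in particular $M_d((x^r-1)^e)$, $M_d((x^r-x-1)^e)$ are these matrices for $h=x^r-1$, $h=x^r-x-1$. For integer triples put $g=\left\{red-\frac{d(d+1)}{2}(p-1)\right\}\big/\frac{r(r-1)}{2}\in\mathbb{Q}$. $\mathscr{U}(p)$ is the set of integer triples $(r,e,d)$ with $r\ge2$, $e\ge1$, $1\le d\le p$, $d(p-1)\le re\le r(p-1)$, $g>0$, and $g\in2\mathbb{Z}$ if $p\ne2$, $g\in\mathbb{Z}$ if $p=2$. $\mathscr{B}(p)=\mathscr{B}_+(p)\cup\mathscr{B}_0(p)\cup\mathscr{B}_-(p)$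 where $\mathscr{B}_+(p)=\{(r,e,d): 2\le r\le p,\ e=p-1,\ d=r\}$, $\mathscr{B}_0(p)=\{(r,e,d): 2\le r\le p+1,\ (p-1)/2<e\le p-1,\ r(p-1-e)\le p-1,\ d=r-1\}$, $\mathscr{B}_-(p)=\{(r,e,d): r\ge2,\ (p-1)/2<e\le p-1,\ r(p-1-e)=p-1,\ d=r-2\}$ (integer triples). *)

(* Defs.v *)
From HB Require Import structures.
From mathcomp Require Import all_boot all_order all_algebra.
Set Implicit Arguments. Unset Strict Implicit. Unset Printing Implicit Defensive.
Import Order.TTheory GRing.Theory Num.Theory.
Local Open Scope ring_scope.

Definition coefz (R : nzRingType) (q : {poly R}) (k : int) : R :=
  if k < 0 then 0 else q`_(absz k).

(* M_d(h^e): the d x d matrix whose (i,j) entry (1-indexed) is c_{ip+j-d-1};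
   with 0-indexed i, j this is c_{(i+1)p + (j+1) - d - 1}. *)
Definition Mmat (p : nat) (h : {poly 'F_p}) (e d : nat) : 'M['F_p]_d :=
  \matrix_(i < d, j < d)
    coefz (h ^+ e) (((i.+1 * p)%N)%:Z + (j.+1)%:Z - d%:Z - 1).

Definition gval (p : nat) (r e d : int) : rat :=
  (r%:~R * e%:~R * d%:~R - d%:~R * (d%:~R + 1) / 2%:R * (p%:R - 1))
  / (r%:~R * (r%:~R - 1) / 2%:R).

Definition inU (p : nat) (r e d : int) : Prop :=
  [/\ 2 <= r, 1 <= e, 1 <= d <= p%:Z &
      d * (p%:Z - 1) <= r * e <= r * (p%:Z - 1)] /\
  0 < gval p r e d /\
      (if p != 2%N then gval p r e d / 2%:R \is a Num.int
       else gval p r e d \is a Num.int).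

(* (p-1)/2 < e  is written as  p - 1 < 2 e  (equivalent over Z). *)
Definition inBplus (p : nat) (r e d : int) : Prop :=
  [/\ 2 <= r <= p%:Z, e = p%:Z - 1 & d = r].
Definition inB0 (p : nat) (r e d : int) : Prop :=
  [/\ 2 <= r <= p%:Z + 1, p%:Z - 1 < 2 * e, e <= p%:Z - 1,
      r * (p%:Z - 1 - e) <= p%:Z - 1 & d = r - 1].
Definition inBminus (p : nat) (r e d : int) : Prop :=
  [/\ 2 <= r, p%:Z - 1 < 2 * e, e <= p%:Z - 1,
      r * (p%:Z - 1 - e) = p%:Z - 1 & d = r - 2].
Definition inB (p : nat) (r e d : int) : Prop :=
  inBplus p r e d \/ inB0 p r e d \/ inBminus p r e d.

Definition polyXr1 (p : nat) (r : int) : {poly 'F_p} := 'X^(absz r) - 1.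
Definition polyXrX1 (p : nat) (r : int) : {poly 'F_p} := 'X^(absz r) - 'X - 1.

(* Main.v *)
Require Import Defs.
From HB Require Import structures.
From mathcomp Require Import all_boot all_order all_algebra.
From mathcomp Require Import all_fingroup.
From mathcomp Require Import zify ring lra.
From Stdlib Require Import Classical_Prop.
Import Order.TTheory GRing.Theory Num.Theory.
Local Open Scope ring_scope.
Set Implicit Arguments. Unset Strict Implicit. Unset Printing Implicit Defensive.

Lemma det_row0 (R : comNzRingType) n (A : 'M[R]_n) i :
  (forall j, A i j = 0) -> \det A = 0.
Proof.
move=> H; rewrite (expand_det_row A i) big1 // => j _; by rewrite H mul0r.
Qed.

Lemma det_single_neq0 (F : fieldType) n (A : 'M[F]_n) (f : 'I_n -> 'I_n) :
  injective f -> (forall i, A i (f i) != 0) ->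
  (forall i j, j != f i -> A i j = 0) -> \det A != 0.
Proof.
move=> injf nz z.
pose s := perm injf.
rewrite /determinant (bigD1 s) //= [X in _ + X]big1 ?addr0.
  rewrite mulf_neq0 ?signr_eq0 //; apply/prodf_neq0 => i _.
  by rewrite permE nz.
move=> t /eqP tns.
have [i hi] : exists i, t i != f i.
  apply/existsP; rewrite -negb_forall; apply/negP => /forallP H.
  by apply: tns; apply/permP => i; rewrite permE; apply/eqP; exact: H.
by rewrite (bigD1 i) //= z // mul0r mulr0.
Qed.

Lemma det_antitrig_neq0 (F : fieldType) n (A : 'M[F]_n) :
  (forall i j : 'I_n, (n <= i + j)%N -> A i j = 0) ->
  (forall i : 'I_n, A i (rev_ord i) != 0) -> \det A != 0.
Proof.
move=> z nz.
pose s : 'S_n := perm (@rev_ord_inj n).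
have E : \det (row_perm s A) = (-1) ^+ s * \det A.
  by rewrite row_permE det_mulmx det_perm.
have : \det (row_perm s A) != 0.
  rewrite det_trig.
    apply/prodf_neq0 => i _; rewrite mxE permE.
    have := nz (rev_ord i); by rewrite rev_ordK.
  apply/is_trig_mxP => i j lij; rewrite mxE permE z //=.
  have := ltn_ord i; lia.
by rewrite E mulf_eq0 negb_or => /andP[].
Qed.
Lemma MmatE p (h : {poly 'F_p}) e d (i j : 'I_d) :
  Mmat h e d i j =
  if (d <= i.+1 * p + j)%N then (h ^+ e)`_(i.+1 * p + j - d) else 0.
Proof.
rewrite /Mmat mxE /coefz.
case: leqP => H.
  have -> : ((i.+1 * p)%N%:Z + j.+1%:Z - d%:Z - 1) = ((i.+1 * p + j - d)%N)%:Z.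
    lia.
  by [].
have -> : ((i.+1 * p)%N%:Z + j.+1%:Z - d%:Z - 1 < 0) = true.
  apply/idP; lia.
by [].
Qed.

Lemma ndvd_fact p n : prime p -> (n < p)%N -> ~~ (p %| n`!)%N.
Proof.
move=> hp; elim: n => [|n IH] lt.
  by rewrite dvdn1; apply/eqP => E; move: (prime_gt1 hp); rewrite E.
rewrite factS Euclid_dvdM // negb_or IH ?andbT; last exact: ltnW.
by apply/negP => /dvdn_leq => /(_ isT); rewrite leqNgt lt.
Qed.

Lemma binF_neq0 p e k : prime p -> (e < p)%N -> (k <= e)%N ->
  ('C(e, k)%:R : 'F_p) != 0.
Proof.
move=> hp ep ke; rewrite -(dvdn_pcharf (pchar_Fp hp)).
apply/negP => H; have : (p %| e`!)%N by rewrite -(bin_fact ke) dvdn_mulr.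
by apply/negP; exact: ndvd_fact.
Qed.

Lemma coef_sign (R : nzRingType) k (q : {poly R}) n :
  ((-1) ^+ k * q)`_n = (-1) ^+ k * q`_n.
Proof.
elim: k => [|k IH]; first by rewrite !expr0 !mul1r.
by rewrite !exprS -!mulrA !mulN1r coefN IH.
Qed.

Lemma coef_Xr1 p (r e n : nat) :
  (('X^r - 1 : {poly 'F_p}) ^+ e)`_n =
  \sum_(i < e.+1) ((-1) ^+ (e - i) * (n == r * i)%N%:R) *+ 'C(e, i).
Proof.
rewrite addrC exprDn coef_sum; apply: eq_bigr => i _.
by rewrite coefMn -exprM coef_sign coefXn.
Qed.

Lemma coef_Xr1_nz p (r e n : nat) :
  (('X^r - 1 : {poly 'F_p}) ^+ e)`_n != 0 -> exists2 k, (k <= e)%N & n = (r * k)%N.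
Proof.
rewrite coef_Xr1 => H.
case: (boolP [exists i : 'I_e.+1, n == r * i]%N) => [/existsP [i /eqP hi]|].
  by exists i => //; rewrite -ltnS.
rewrite negb_exists => /forallP A.
move: H; rewrite big1 ?eqxx // => i _; by rewrite (negbTE (A i)) mulr0 mul0rn.
Qed.

Lemma coef_Xr1_neq0 p (r e k : nat) : prime p -> (0 < r)%N -> (e < p)%N -> (k <= e)%N ->
  (('X^r - 1 : {poly 'F_p}) ^+ e)`_(r * k) != 0.
Proof.
move=> hp r0 ep ke; rewrite coef_Xr1.
have kl : (k < e.+1)%N by [].
rewrite (bigD1 (Ordinal kl)) //= big1 ?addr0.
  by rewrite eqxx mulr1 -mulr_natr mulf_neq0 ?signr_eq0 // binF_neq0.
move=> i /eqP ne; have -> : (r * k == r * i)%N = false.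
  by rewrite eqn_mul2l (gtn_eqF r0) /=; apply/eqP => E; apply: ne; apply: val_inj.
by rewrite mulr0 mul0rn.
Qed.
Lemma sizeY p i : size (('X + 1 : {poly 'F_p}) ^+ i) = i.+1.
Proof.
have M : ('X + 1 : {poly 'F_p}) ^+ i \is monic by rewrite monic_exp // -polyC1 monicXaddC.
have H := size_exp ('X + 1 : {poly 'F_p}) i.
rewrite -polyC1 size_XaddC mul1n in H.
have gt0 : (0 < size (('X + 1 : {poly 'F_p}) ^+ i))%N.
  by rewrite size_poly_gt0; apply: monic_neq0.
by rewrite -(prednK gt0) -polyC1 H.
Qed.

Lemma coefq_hi p i m : (i < m)%N -> ((- ('X + 1 : {poly 'F_p})) ^+ i)`_m = 0.
Proof.
move=> im; rewrite exprNn coef_sign nth_default ?mulr0 //.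
by rewrite sizeY.
Qed.

Lemma coefq_top p i : ((- ('X + 1 : {poly 'F_p})) ^+ i)`_i = (-1) ^+ i.
Proof.
rewrite [in LHS]exprNn coef_sign.
have M : ('X + 1 : {poly 'F_p}) ^+ i \is monic by rewrite monic_exp // -polyC1 monicXaddC.
move/monicP: M; rewrite lead_coefE sizeY /= => ->; by rewrite mulr1.
Qed.

Lemma coef_XrX1 p (r e n : nat) :
  (('X^r - 'X - 1 : {poly 'F_p}) ^+ e)`_n =
  \sum_(i < e.+1) (if (r * (e - i) <= n)%N
                   then ((- ('X + 1 : {poly 'F_p})) ^+ i)`_(n - r * (e - i)) else 0)
                  *+ 'C(e, i).
Proof.
have -> : ('X^r - 'X - 1 : {poly 'F_p}) = 'X^r + (- ('X + 1)) by rewrite opprD addrA.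
rewrite exprDn coef_sum; apply: eq_bigr => i _.
rewrite coefMn -exprM coefXnM; congr (_ *+ _).
by case: leqP.
Qed.

Definition rowok (p R E D I : nat) : Prop :=
  exists2 k, (k <= E)%N & (I * p <= R * k + D)%N /\ (R * k < I * p)%N.

Lemma mult_close (R k k' a b : nat) : (a < R)%N -> (b < R)%N ->
  (R * k + a = R * k' + b)%N -> k = k' /\ a = b.
Proof.
move=> aR bR E.
have R0 : (0 < R)%N by lia.
have H1 : ((R * k + a) %/ R = k)%N by rewrite mulnC divnMDl // divn_small // addn0.
have H2 : ((R * k' + b) %/ R = k')%N by rewrite mulnC divnMDl // divn_small // addn0.
have kk : k = k' by rewrite -H1 -H2 E.
split=> //; subst; lia.
Qed.

Lemma det_Xr1_row0 p (R E D : nat) (I : nat) : (1 <= I <= D)%N -> ~ rowok p R E D I ->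
  \det (Mmat ('X^R - 1 : {poly 'F_p}) E D) = 0.
Proof.
move=> /andP[I1 ID] nok.
have iD : (I.-1 < D)%N by lia.
apply: (@det_row0 _ _ _ (Ordinal iD)) => j.
rewrite MmatE /=; case: leqP => // H.
apply/eqP; apply/negPn/negP => /coef_Xr1_nz [k kE hk].
apply: nok; exists k => //.
rewrite prednK // in H hk; have := ltn_ord j.
lia.
Qed.

Lemma rows_inj p (R D i i' j k k' : nat) : prime p -> (D <= R)%N -> coprime p R ->
  (i < D)%N -> (i' < D)%N ->
  (i.+1 * p + j = R * k + D)%N -> (i'.+1 * p + j = R * k' + D)%N -> i = i'.
Proof.
move=> hp DR cop.
wlog le : i i' k k' / (i <= i')%N.
  move=> W iD iD' hk hk'; case: (leqP i i') => h; first exact: (W i i' k k').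
  symmetry; apply: (W i' i k' k) => //; exact: ltnW.
move=> iD iD' hk hk'.
have e1 : ((i' - i) * p = R * (k' - k))%N by rewrite mulnBl mulnBr; lia.
have : (R %| (i' - i) * p)%N by rewrite e1 dvdn_mulr.
rewrite Gauss_dvdl; last by rewrite coprime_sym.
move=> H; case: (ltnP i i') => lt; last lia.
have := dvdn_leq _ H; rewrite subn_gt0 => /(_ lt); lia.
Qed.

Lemma det_Xr1_neq0 p (R E D : nat) : prime p -> (0 < R)%N -> (E < p)%N -> (D <= R)%N ->
  coprime p R -> (forall I, (1 <= I <= D)%N -> rowok p R E D I) ->
  \det (Mmat ('X^R - 1 : {poly 'F_p}) E D) != 0.
Proof.
move=> hp R0 Ep DR cop ok.
set A := Mmat _ E D.
have ex : forall i : 'I_D, exists j, A i j != 0.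
  move=> i; have [k kE [h1 h2]] := ok i.+1 (ltn_ord i).
  have jD : (R * k + D - i.+1 * p < D)%N by lia.
  exists (Ordinal jD); rewrite /A MmatE /=.
  have -> : (D <= i.+1 * p + (R * k + D - i.+1 * p))%N = true by apply/idP; lia.
  have -> : (i.+1 * p + (R * k + D - i.+1 * p) - D = R * k)%N by lia.
  exact: coef_Xr1_neq0.
have val : forall (i j : 'I_D), A i j != 0 -> exists2 k, (k <= E)%N & (i.+1 * p + j = R * k + D)%N.
  move=> i j; rewrite /A MmatE; case: leqP => H; last by rewrite eqxx.
  move/coef_Xr1_nz => [k kE hk]; exists k => //; lia.
have uniq : forall (i : 'I_D) (j j' : 'I_D), A i j != 0 -> A i j' != 0 -> j = j'.
  move=> i j j' /val [k _ hk] /val [k' _ hk']; apply: val_inj => /=.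
  have jD := ltn_ord j; have jD' := ltn_ord j'.
  have [a b] : (R * k + (D - j.+1) = R * k' + (D - j'.+1))%N /\ True by split => //; lia.
  have := mult_close (R := R) (k := k) (k' := k') (a := (D - j.+1)%N) (b := (D - j'.+1)%N).
  move=> /(_ _ _ a) []; try lia.
pose f i := odflt i [pick j | A i j != 0].
have fP : forall i, A i (f i) != 0.
  move=> i; rewrite /f; case: pickP => [j //|H].
  by have [j hj] := ex i; move: (H j); rewrite hj.
apply: (@det_single_neq0 _ _ _ f).
- move=> i i' Efi.
  have [k _ hk] := val _ _ (fP i).
  have [k' _ hk'] := val _ _ (fP i'); rewrite -Efi in hk'.
  apply: val_inj; apply: (rows_inj hp DR cop (ltn_ord i) (ltn_ord i') hk hk').
- exact: fP.
- move=> i j ne; apply/eqP; apply/negPn/negP => nz.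
  by move/eqP: ne; apply; apply: (uniq i) => //; exact: fP.
Qed.

Lemma coef_XrX1_0 p (r e n : nat) :
  (forall t, (t <= e)%N -> (r * (e - t) <= n)%N -> (t < n - r * (e - t))%N) ->
  (('X^r - 'X - 1 : {poly 'F_p}) ^+ e)`_n = 0.
Proof.
move=> H; rewrite coef_XrX1 big1 // => t _.
case: leqP => h; last by rewrite mul0rn.
by rewrite coefq_hi ?mul0rn // H // -ltnS.
Qed.

Lemma det_XpX1_neq0 p d : prime p -> (d <= p)%N ->
  \det (Mmat ('X^p - 'X - 1 : {poly 'F_p}) p.-1 d) != 0.
Proof.
move=> hp dp; have p2 := prime_gt1 hp.
apply: det_antitrig_neq0.
  move=> i j hij; rewrite MmatE; case: leqP => // h.
  apply: coef_XrX1_0 => t te h2.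
  have := ltn_ord i; have := ltn_ord j => jd id.
  set k := (p.-1 - t)%N in h2 *.
  have kt : (t = p.-1 - k)%N by rewrite /k; lia.
  have ki : (k <= i)%N.
    rewrite leqNgt; apply/negP => lt.
    have : (p * i.+1 <= p * k)%N by rewrite leq_mul2l lt orbT.
    lia.
  have : (p * k + p * (i - k) = p * i)%N by rewrite -mulnDr subnKC.
  nia.
move=> i; rewrite MmatE /=.
have -> : (d <= i.+1 * p + (d - i.+1))%N = true by apply/idP; have := ltn_ord i; nia.
have hn : (i.+1 * p + (d - i.+1) - d = p * i + (p.-1 - i))%N by have := ltn_ord i; nia.
rewrite hn coef_XrX1.
have il : (i < d)%N := ltn_ord i.
have tl : (p.-1 - i < p.-1.+1)%N by lia.
rewrite (bigD1 (Ordinal tl)) //= big1 ?addr0.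
  have -> : (p.-1 - (p.-1 - i) = i)%N by lia.
  rewrite leq_addr addKn coefq_top -mulr_natr mulf_neq0 ?signr_eq0 //.
  apply: binF_neq0 => //; lia.
move=> t /eqP ne.
case: leqP => h; last by rewrite mul0rn.
rewrite coefq_hi ?mul0rn //.
have tp := ltn_ord t.
set k := (p.-1 - t)%N in h *.
have kt : (t = p.-1 - k :> nat)%N by rewrite /k; lia.
have kni : k != i.
  apply/eqP => ki; apply: ne; apply: val_inj => /=; lia.
have ki : (k < i)%N.
  rewrite ltn_neqAle kni /= leqNgt; apply/negP => lt.
  have : (p * i.+1 <= p * k)%N by rewrite leq_mul2l lt orbT.
  lia.
have : (p * k + p * (i - k) = p * i)%N by rewrite -mulnDr subnKC // ltnW.
have : (p * 1 <= p * (i - k))%N by rewrite leq_mul2l subn_gt0 ki orbT.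
nia.
Qed.

Lemma det_XmpX1_0 p (r e d : nat) : prime p -> (2 * p <= r)%N -> (e < p)%N ->
  (2 <= d <= p)%N -> \det (Mmat ('X^r - 'X - 1 : {poly 'F_p}) e d) = 0.
Proof.
move=> hp rp ep /andP[d2 dp].
have iD : (1 < d)%N by [].
apply: (@det_row0 _ _ _ (Ordinal iD)) => j.
rewrite MmatE /=; case: leqP => // h.
apply: coef_XrX1_0 => t te h2.
have := ltn_ord j => jd.
case: (e - t)%N (leqnn (e - t)%N) h2 => [|k] _ h2.
  rewrite muln0 subn0; lia.
have : (r * 1 <= r * k.+1)%N by rewrite leq_mul2l ltn0Sn orbT.
lia.
Qed.

Lemma gval_eq p (r e d : int) (z : rat) : 2 <= r -> Defs.gval p r e d = z ->
  z * (r%:~R * (r%:~R - 1)) = 2 * r%:~R * e%:~R * d%:~R - d%:~R * (d%:~R + 1) * (p%:R - 1).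
Proof.
move=> r2 <-; rewrite /Defs.gval.
have r0 : (r%:~R : rat) != 0 by rewrite intr_eq0; apply/eqP; lia.
have r1 : (r%:~R - 1 : rat) != 0.
  have : ((r - 1)%:~R : rat) != 0 by rewrite intr_eq0; apply/eqP; lia.
  by rewrite rmorphB.
field. by rewrite r0 r1.
Qed.

Lemma inU_int p r e d : inU p r e d -> exists z : int,
  0 < z /\ z * (r * (r - 1)) = 2 * r * e * d - d * (d + 1) * (p%:Z - 1).
Proof.
case=> [[r2 e1 dd ineq] [gpos gint]].
have [z hz] : exists z : int, Defs.gval p r e d = z%:~R.
  move: gint; case: ifP => _ /intrP [w hw].
    exists (w * 2); rewrite rmorphM /= -hw mulfVK //.
  by exists w.
exists z; split.
  by move: gpos; rewrite hz ltr0z.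
have := gval_eq r2 hz.
move=> H; apply/eqP; rewrite -(eqr_int rat) !(rmorphM, rmorphB, rmorphD, rmorph1) /=.
rewrite -natz rmorph_nat; apply/eqP; rewrite H; ring.
Qed.

Lemma half_int p : prime p -> p != 2%N -> ((p%:R - 1) / 2%:R : rat) \is a Num.int.
Proof.
move=> hp p2; have [/eqP|op] := even_prime hp; first by rewrite (negbTE p2).
apply/intrP; exists (p./2)%:Z.
rewrite -{1}(odd_double_half p) op -addn1 addnC natrD -muln2 natrM.
rewrite -natz rmorph_nat.
have -> : (true%:R : rat) = 1 by [].
by rewrite addrK mulfK.

Qed.

Lemma gval_plus p (r : int) : 2 <= r -> Defs.gval p r (p%:Z - 1) r = (p%:R - 1 : rat).
Proof.
move=> r2; rewrite /Defs.gval rmorphB /= -natz rmorph_nat.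
have r0 : (r%:~R : rat) != 0 by rewrite intr_eq0; apply/eqP; lia.
have r1 : (r%:~R - 1 : rat) != 0.
  have : ((r - 1)%:~R : rat) != 0 by rewrite intr_eq0; apply/eqP; lia.
  by rewrite rmorphB.
field. by rewrite r0 r1.
Qed.

Lemma gval_zero p (r e : int) : 2 <= r -> Defs.gval p r e (r - 1) = (2 * e%:~R - (p%:R - 1) : rat).
Proof.
move=> r2; rewrite /Defs.gval rmorphB /=.
have r0 : (r%:~R : rat) != 0 by rewrite intr_eq0; apply/eqP; lia.
have r1 : (r%:~R - 1 : rat) != 0.
  have : ((r - 1)%:~R : rat) != 0 by rewrite intr_eq0; apply/eqP; lia.
  by rewrite rmorphB.
field. by rewrite r0 r1.
Qed.

Lemma inU_plus p (r : int) : prime p -> 2 <= r <= p%:Z -> inU p r (p%:Z - 1) r.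
Proof.
move=> hp /andP[r2 rp]; have p2 := prime_gt1 hp.
split; first by split; lia.
rewrite gval_plus //; split.
  by rewrite subr_gt0 ltr1n.
case: ifP => p2'; first exact: half_int.
move/negbFE/eqP: p2' => ->; apply/intrP; exists 1; done.
Qed.

Lemma inU_zero p (r e : int) : prime p -> 2 <= r <= p%:Z + 1 -> p%:Z - 1 < 2 * e ->
  e <= p%:Z - 1 -> r * (p%:Z - 1 - e) <= p%:Z - 1 -> inU p r e (r - 1).
Proof.
move=> hp /andP[r2 rp] h1 h2 h3; have p2 := prime_gt1 hp.
split; first by split; nia.
rewrite gval_zero //.
have E : (2 * e%:~R - (p%:R - 1) : rat) = (2 * e - (p%:Z - 1))%:~R.
  by rewrite !(rmorphB, rmorphM, rmorph1) /=.
rewrite E; split.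
  by rewrite ltr0z; lia.
case: ifP => p2'.
  have := half_int hp p2'; move/intrP => [w hw].
  apply/intrP; exists (e - w).
  by rewrite -E rmorphB /= -hw; field.
exact: intr_int.
Qed.

Local Close Scope ring_scope.
Lemma modinj (R a i i' : nat) : coprime a R -> i < R -> i' < R ->
  (i * a) %% R = (i' * a) %% R -> i = i'.
Proof.
move=> cop.
wlog le : i i' / i <= i'.
  move=> W iR iR' E; case: (leqP i i') => h; first exact: W.
  symmetry; apply: W => //; exact: ltnW.
move=> iR iR' /eqP E.
have : R %| (i' - i) * a.
  by rewrite mulnBl -eqn_mod_dvd ?leq_mul2r ?le ?orbT // eq_sym.
rewrite Gauss_dvdl; last by rewrite coprime_sym.
case: (ltnP i i') => lt; last lia.
move=> H; have := dvdn_leq _ H; rewrite subn_gt0 => /(_ lt); lia.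
Qed.

Lemma pigeon (R a D : nat) : coprime a R -> 1 <= D -> D + 2 <= R ->
  (forall I, 1 <= I <= D -> 1 <= (I * a) %% R <= D) -> a %% R = 1.
Proof.
move=> cop D1 DR H.
case: D D1 DR H => [//|D'] _ DR H.
pose g (x : 'I_D'.+1) : 'I_D'.+1 := inord ((x.+1 * a) %% R).-1.
have gE : forall x : 'I_D'.+1, (g x).+1 = (x.+1 * a) %% R.
  move=> x; rewrite /g inordK; have := H x.+1 (ltn_ord x); lia.
have ginj : injective g.
  move=> x y E; apply: val_inj => /=.
  have : (x.+1 * a) %% R = (y.+1 * a) %% R by rewrite -!gE E.
  move/modinj => /(_ cop); have := ltn_ord x; have := ltn_ord y.
  move=> hy hx h; have : x.+1 = y.+1 by apply: h; lia.
  by case.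
have [g' gK g'K] := injF_bij ginj.
have surj : forall t, 1 <= t <= D'.+1 -> exists2 y, 1 <= y <= D'.+1 & (y * a) %% R = t.
  move=> t ht; have tl : t.-1 < D'.+1 by lia.
  exists (g' (Ordinal tl)).+1; first by rewrite ltnS ltn_ord.
  by rewrite -gE g'K /=; lia.
set b := a %% R.
apply/eqP; apply/negPn/negP => b1.
have R0 : 0 < R by lia.
have hb : 1 <= b <= D'.+1 by have := H 1 isT; rewrite mul1n.
have [y0 hy0 ey0] := surj 1 isT.
have y0ne1 : y0 != 1 by apply/eqP => E; move: ey0; rewrite E mul1n -/b => E'; by rewrite E' in b1.
have hs := H y0.-1 ltac:(lia).
set s := (y0.-1 * a) %% R in hs.
have e1 : (s + b) %% R = 1.
  by rewrite modnDm -mulSnr prednK ?ey0 //; lia.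
have e2 : s + b = R.+1.
  case: (ltnP (s + b) R) => h.
    by move: e1; rewrite modn_small //; lia.
  move: e1; rewrite -(subnK h) modnDr modn_small; lia.
have [z hz ez] := surj (R - b) ltac:(lia).
have : (z.+1 * a) %% R = 0.
  rewrite mulSn addnC -modnDm ez -/b subnK ?modnn //; lia.
move/eqP; rewrite -/(dvdn R _) Gauss_dvdl; last by rewrite coprime_sym.
move/dvdn_leq => /(_ isT); lia.
Qed.

Lemma partii_rows p R E D : prime p -> p < R -> 1 <= D <= p -> E <= p.-1 ->
  (forall I, 1 <= I <= D -> rowok p R E D I) -> [/\ D = p, R = p.+1 & E = p.-1].
Proof.
move=> hp pR /andP[D1 Dp] Ep ok.
have p2 := prime_gt1 hp.
have Dp' : D = p.
  have [k _ [h1 h2]] := ok 1 ltac:(lia).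
  case: k h1 h2 => [|k] h1 h2; first lia.
  have : R * 1 <= R * k.+1 by rewrite leq_mul2l ltn0Sn orbT.
  lia.
subst D.
have chain : forall I, 1 <= I <= p -> forall k, I * p <= R * k + p -> R * k < I * p -> I.-1 <= k.
  elim=> [//|I IH] hI k h1 h2.
  case: I IH hI h1 h2 => [|I] IH hI h1 h2; first by [].
  have [k' _ [h1' h2']] := ok I.+1 ltac:(lia).
  have := IH ltac:(lia) k' h1' h2'.
  have : R * k' < R * k by lia.
  rewrite ltn_mul2l => /andP[_ lt] ; lia.
have [k kE [h1 h2]] := ok p ltac:(lia).
have := chain p ltac:(lia) k h1 h2 => kp.
have kp' : k = p.-1 by lia.
subst k.
split => //; last by lia.
have : R * p.-1 < p.-1.+1 * p by rewrite prednK; lia.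
have : p.+1 * p.-1 < (p.+2) * p.-1 by rewrite ltn_mul2r; lia.
move=> _ h.
have : R * p.-1 <= p.+1 * p.-1.
  have -> : p.+1 * p.-1 = p.-1.+1 * p - 1 by rewrite prednK //; nia.
  lia.
rewrite leq_mul2r => /orP[|]; lia.
Qed.

Lemma rowok_mod p R E D I : D < R -> rowok p R E D I -> 1 <= (I * p) %% R <= D.
Proof.
move=> DR [k _ [h1 h2]].
have -> : I * p = k * R + (I * p - R * k) by rewrite [k * R]mulnC addnC subnK //; lia.
rewrite modnMDl modn_small; lia.
Qed.

Lemma partiii_rows p R E D : prime p -> 2 <= R <= p.-1 -> ~~ (R %| p.-1) ->
  1 <= D <= R -> E <= p.-1 ->
  (forall I, 1 <= I <= D -> rowok p R E D I) ->
  (D = R /\ E = p.-1) \/ (D = R.-1 /\ R * (p.-1 - E) <= p.-1).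
Proof.
move=> hp /andP[R2 Rp] nd /andP[D1 DR] Ep ok.
have p2 := prime_gt1 hp.
have [DeR|DltR] := eqVneq D R.
  subst D; left; split => //.
  have [k kE [h1 h2]] := ok R ltac:(lia).
  have : R * p <= R * k.+1 by rewrite mulnS; lia.
  rewrite leq_mul2l => /orP[|]; lia.
have [DeR1|DltR1] := eqVneq D R.-1.
  subst D; right; split => //.
  have [k kE [h1 h2]] := ok R.-1 ltac:(lia).
  have e1 : R * (p.-1 - E) <= R * (p.-1 - k) by rewrite leq_mul2l; apply/orP; right; lia.
  have e2 : R * (p.-1 - k) = R * p.-1 - R * k by rewrite mulnBr.
  have e3 : R * p.-1 = R.-1 * p + p - R.
    rewrite -!subn1 mulnBr mulnBl muln1 mul1n.
    have : p <= R * p by rewrite leq_pmull; lia.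
    have : R <= R * p by rewrite leq_pmulr; lia.
    lia.
  lia.
exfalso.
have cop : coprime p R.
  rewrite prime_coprime //; apply/negP => /dvdn_leq; lia.
have := pigeon (R := R) (a := p) (D := D).
move=> /(_ cop D1 ltac:(lia)).
have H : forall I, 1 <= I <= D -> 1 <= (I * p) %% R <= D.
  move=> I hI; apply: (rowok_mod (E := E)); [lia | exact: ok].
move=> /(_ H) pm.
have := divn_eq p R; rewrite pm => Ep'.
have : p.-1 = p %/ R * R by lia.
by move=> E1; move: nd; rewrite E1 dvdn_mull.
Qed.

Lemma rows_iii p R E D : prime p -> 2 <= R <= p.-1 -> D <= R -> R <= D.+1 ->
  (D * p <= R * E + R) ->
  (D < R -> forall I, 1 <= I <= D -> ~~ (R %| I * p)) ->
  forall I, 1 <= I <= D -> rowok p R E D I.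
Proof.
move=> hp /andP[R2 Rp] DR DR1 hE nd I hI.
have R0 : 0 < R by lia.
have dv := divn_eq ((I * p).-1) R.
have md := ltn_pmod ((I * p).-1) R0.
set q := (I * p).-1 %/ R in dv *.
set m := (I * p).-1 %% R in dv md.
have Ip : 0 < I * p by rewrite muln_gt0; have := prime_gt1 hp; lia.
exists q; last first.
  split; last by rewrite mulnC; lia.
  case: (ltnP D R) => DR'.
    have := nd DR' I hI; rewrite /dvdn.
    have : I * p = q * R + m.+1 by lia.
    move=> ->; rewrite modnMDl.
    case: (ltnP m.+1 R) => h.
      rewrite modn_small //; lia.
    have -> : m.+1 = R by lia.
    by rewrite modnn.
  have -> : D = R by lia.
  rewrite mulnC; lia.
have : q * R < (E + 1) * R.
  have : I * p <= D * p by rewrite leq_mul2r; lia.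
  rewrite mulnDl mul1n; lia.
rewrite ltn_mul2r; lia.
Qed.


Local Open Scope ring_scope.

Lemma natify (x : int) : 0 <= x -> exists n : nat, x = n%:Z.
Proof. by case: x => [n _|n]; [exists n | rewrite /= ]. Qed.

Lemma dvd_eq_p p R : prime p -> (p %| R)%N -> (0 < R)%N -> (R < 2 * p)%N -> R = p.
Proof.
move=> hp /dvdnP [m ->] R0 R2.
move: R2; rewrite ltn_mul2r => /andP[_ m2].
have : m = 1%N by case: m R0 m2 => [|[|]].
by move=> ->; rewrite mul1n.
Qed.

Lemma part1_U p (hp : prime p) (E D : nat) :
  inU p p%:Z E%:Z D%:Z -> E = p.-1 /\ (D = p \/ D = p.-1).
Proof.
move=> hU.
have p2 := prime_gt1 hp.
have [[r2 e1 /andP[d1 dp] /andP[i1 i2]] _] := hU.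
have Ep : (E <= p.-1)%N.
  have : E%:Z <= p%:Z - 1 by rewrite -(@ler_pM2l _ p%:Z) //; lia.
  lia.
have [z [z0 hz]] := inU_int hU.
have dv : (p %| D * (D + 1) * p.-1)%N.
  have : (D * (D + 1) * p.-1)%N%:Z = p%:Z * (2 * E%:Z * D%:Z - z * (p%:Z - 1)).
    have -> : (D * (D + 1) * p.-1)%N%:Z = D%:Z * (D%:Z + 1) * (p%:Z - 1) by lia.
    have : D%:Z * (D%:Z + 1) * (p%:Z - 1) = 2 * p%:Z * E%:Z * D%:Z - z * (p%:Z * (p%:Z - 1)) by lia.
    move=> ->; ring.
  move=> H.
  have : (p%:Z %| (D * (D + 1) * p.-1)%N%:Z)%Z by rewrite H; apply: dvdz_mulr; exact: dvdzz.
  by [].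
have npm : ~~ (p %| p.-1)%N by apply/negP => /dvdn_leq; lia.
move: dv; rewrite !Euclid_dvdM // (negbTE npm) orbF => /orP[] hd.
  have := dvdn_leq d1 hd => ?; have hD : D = p by lia.
  subst D; split => //; last by left.
  have hz' : z * (p%:Z - 1) = 2 * p%:Z * E%:Z - (p%:Z + 1) * (p%:Z - 1).
    apply: (@mulfI _ p%:Z); first by apply/eqP; lia.
    lia.
  set c := z + p%:Z + 1 - 2 * E%:Z.
  have hc : 2 * E%:Z = c * (p%:Z - 1) by rewrite /c; lia.
  have c0 : 0 < c.
    case: (ltP 0 c) => // h.
    have : c * (p%:Z - 1) <= 0 by apply: mulr_le0_ge0; lia.
    lia.
  have c2 : c <= 2.
    case: (leP c 2) => // h.
    have : 3 * (p%:Z - 1) <= c * (p%:Z - 1) by rewrite ler_pM2r; lia.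
    lia.
  have : c = 1 \/ c = 2 by lia.
  case=> hc'.
    rewrite hc' in hc; rewrite /c in hc'; lia.
  rewrite hc' in hc; lia.
have := @dvdn_leq p (D + 1) ltac:(lia) hd => ?.
have hD : D = p.-1.
  case: (ltnP D p.-1) => h; first lia.
  have : D = p \/ D = p.-1 by lia.
  case=> // hD'; subst D.
  move: hd; rewrite addn1 => hd.
  have : (p %| p.+1 - p)%N by rewrite dvdn_sub ?dvdnn.
  by rewrite subSnn dvdn1; lia.
subst D; split; last by right.
have : (p.-1 * p.-1 <= p * E)%N.
  have : (p.-1 * p.-1)%N%:Z <= (p * E)%N%:Z by rewrite !PoszM; lia.
  by [].
move=> h.
case: (ltnP E p.-1) => hE; last lia.
have : (p * E <= p * (p.-1).-1)%N by rewrite leq_mul2l; lia.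
move=> h2; exfalso; move: h h2 p2; clear; case: p => [|[|q]] //= h1 h2 _.
have : (q.+2 * q < q.+1 * q.+1)%N by rewrite !mulSn; lia.
lia.
Qed.

Lemma part1 p (hp : prime p) : forall r e d : int,
     (inU p r e d /\ (p%:Z %| r)%Z
      /\ \det (Mmat (polyXrX1 p r) (absz e) (absz d)) != 0)
     <-> (inB p r e d /\ (p%:Z %| r)%Z).
Proof.
have p2 := prime_gt1 hp.
have pE : p%:Z - 1 = (p.-1)%:Z by lia.
move=> r e d; split.
  move=> [hU [pr dt]].
  have [[r2 e1 /andP[d1 dp] /andP[i1 i2]] _] := hU.
  have [R ?] : exists R : nat, r = R%:Z by apply: natify; lia.
  subst r.
  have [E ?] : exists E : nat, e = E%:Z by apply: natify; lia.
  subst e.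
  have [D ?] : exists D : nat, d = D%:Z by apply: natify; lia.
  subst d.
  move: dt pr; rewrite /polyXrX1 /= => dt pr.
  have Ep : (E <= p.-1)%N.
    have : E%:Z <= p%:Z - 1 by rewrite -(@ler_pM2l _ R%:Z) //; lia.
    lia.
  case: (ltnP R (2 * p)) => hR.
    have hRp : R = p by apply: dvd_eq_p => //; lia.
    subst R.
    have [hE hD] := part1_U hp hU.
    subst E; split => //.
    case: hD => hD; subst D.
      left; split; lia.
    right; left; split; lia.
  exfalso.
  case: (ltnP 1 D) => hD.
    move: dt; rewrite det_XmpX1_0 ?eqxx //; lia.
  have hD1 : D = 1%N by lia.
  subst D.
  have [z [z0 hz]] := inU_int hU.
  have h1 : R%:Z * (R%:Z - 1) <= z * (R%:Z * (R%:Z - 1)).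
    by rewrite ler_peMl //; nia.
  have h2 : R%:Z * (R%:Z - 1) <= (R%:Z - 1) * (2 * (p%:Z - 1)).
    have : R%:Z * E%:Z <= R%:Z * (p%:Z - 1) by lia.
    nia.
  have : R%:Z <= 2 * (p%:Z - 1).
    rewrite -(@ler_pM2l _ (R%:Z - 1)); last by lia.
    by rewrite mulrC.
  lia.
move=> [hB pr].
have [R ?] : exists R : nat, r = R%:Z.
  by apply: natify; case: hB => [[]|[[]|[]]]; lia.
subst r.
case: hB => [[/andP[r2 r3] he hd]|[[/andP[r2 r3] h1 h2 h3 hd]|[r2 h1 h2 h3 hd]]].
- have hRp : R = p by apply: dvd_eq_p => //; lia.
  subst R; subst.
  split; first by apply: inU_plus => //; lia.
  split; first exact: dvdzz.
  rewrite /polyXrX1 pE /=.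
  by apply: det_XpX1_neq0 => //; lia.
- have hRp : R = p by apply: dvd_eq_p => //; lia.
  subst R.
  have he : e = p.-1%:Z.
    have : p%:Z * (p%:Z - 1 - e) < p%:Z * 1 by lia.
    rewrite ltr_pM2l; lia.
  subst.
  split; first by apply: inU_zero => //; lia.
  split; first exact: dvdzz.
  rewrite /polyXrX1 /=.
  have -> : `|p%:Z - 1|%N = p.-1 by lia.
  by apply: det_XpX1_neq0 => //; lia.
- exfalso.
  have [E ?] : exists E : nat, e = E%:Z by apply: natify; lia.
  subst e.
  have : (p.-1 = R * (p.-1 - E))%N.
    have : (p.-1)%:Z = (R * (p.-1 - E))%N%:Z.
      rewrite -pE -h3 PoszM; congr (_ * _); lia.
    by case.
  move=> E1.
  have : (p %| p.-1)%N by rewrite E1 dvdn_mulr.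
  move/dvdn_leq; lia.
Qed.

Lemma part2 p (hp : prime p) : forall r e d : int,
     (inU p r e d /\ p%:Z < r /\ ~~ (p%:Z %| r)%Z
      /\ \det (Mmat (polyXr1 p r) (absz e) (absz d)) != 0)
     <-> (inB p r e d /\ p%:Z < r /\ ~~ (p%:Z %| r)%Z).
Proof.
have p2 := prime_gt1 hp.
move=> r e d; split.
  move=> [hU [pr [ndv dt]]].
  have [[r2 e1 /andP[d1 dp] /andP[i1 i2]] _] := hU.
  have [R ?] : exists R : nat, r = R%:Z by apply: natify; lia.
  subst r.
  have [E ?] : exists E : nat, e = E%:Z by apply: natify; lia.
  subst e.
  have [D ?] : exists D : nat, d = D%:Z by apply: natify; lia.
  subst d.
  move: dt ndv; rewrite /polyXr1 /= => dt ndv.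
  have Ep : (E <= p.-1)%N.
    have : E%:Z <= p%:Z - 1 by rewrite -(@ler_pM2l _ R%:Z) //; lia.
    lia.
  have DR : (D <= R)%N.
    have : D%:Z * (p%:Z - 1) <= R%:Z * (p%:Z - 1) by lia.
    rewrite ler_pM2r; [lia | lia].
  have cop : coprime p R by rewrite prime_coprime.
  have ok : forall I, (1 <= I <= D)%N -> rowok p R E D I.
    move=> I hI; apply: NNPP => nok.
    by move: dt; rewrite (det_Xr1_row0 hI nok) eqxx.
  have [hD hR hE] := partii_rows hp (ltac:(lia) : (p < R)%N) (ltac:(lia) : (1 <= D <= p)%N) Ep ok.
  subst; split => //; right; left; split; lia.
move=> [hB [pr ndv]].
have [er ee ed] : [/\ r = p.+1%:Z, e = p.-1%:Z & d = p%:Z].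
  case: hB => [[]|[[]|[]]].
  - move=> *; lia.
  - move=> /andP[r2 r3] h1 h2 h3 h4.
    have er : r = p.+1%:Z by lia.
    rewrite er in h3.
    have : (p.+1%:Z) * (p%:Z - 1 - e) < p.+1%:Z * 1 by lia.
    rewrite ltr_pM2l; last by lia.
    move=> h; split; lia.
  - move=> r2 h1 h2 h3 h4.
    have h5 : 1 <= p%:Z - 1 - e.
      case: (ltP 0 (p%:Z - 1 - e)) => h; first lia.
      have : p%:Z - 1 - e = 0 by lia.
      move=> E0; rewrite E0 mulr0 in h3; lia.
    have : r * 1 <= r * (p%:Z - 1 - e) by rewrite ler_pM2l; lia.
    split; lia.
subst; split; [|split=> //].
  have -> : p%:Z = (p.+1%:Z) - 1 by lia.
  apply: inU_zero => //; lia.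
rewrite /polyXr1 /=; split => //.
apply: det_Xr1_neq0 => //; first by lia.
  by rewrite coprimenS.
move=> I hI; exists I.-1; first lia.
split; nia.
Qed.

Lemma part3 p (hp : prime p) : forall r e d : int,
     (inU p r e d /\ 2 <= r <= p%:Z - 1 /\ ~~ (r %| p%:Z - 1)%Z
      /\ \det (Mmat (polyXr1 p r) (absz e) (absz d)) != 0)
     <-> (inB p r e d /\ 2 <= r <= p%:Z - 1 /\ ~~ (r %| p%:Z - 1)%Z).
Proof.
have p2 := prime_gt1 hp.
have pE : p%:Z - 1 = (p.-1)%:Z by lia.
move=> r e d; split.
  move=> [hU [rp [ndv dt]]].
  have [[r2 e1 /andP[d1 dp] /andP[i1 i2]] _] := hU.
  have [R ?] : exists R : nat, r = R%:Z by apply: natify; lia.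
  subst r.
  have [E ?] : exists E : nat, e = E%:Z by apply: natify; lia.
  subst e.
  have [D ?] : exists D : nat, d = D%:Z by apply: natify; lia.
  subst d.
  move: dt ndv; rewrite /polyXr1 pE /= => dt ndv.
  have Ep : (E <= p.-1)%N.
    have : E%:Z <= p%:Z - 1 by rewrite -(@ler_pM2l _ R%:Z) //; lia.
    lia.
  have DR : (D <= R)%N.
    have : D%:Z * (p%:Z - 1) <= R%:Z * (p%:Z - 1) by lia.
    rewrite ler_pM2r; [lia | lia].
  have cop : coprime p R.
    rewrite prime_coprime //; apply/negP => /dvdn_leq; lia.
  have ok : forall I, (1 <= I <= D)%N -> rowok p R E D I.
    move=> I hI; apply: NNPP => nok.
    by move: dt; rewrite (det_Xr1_row0 hI nok) eqxx.
  have := partiii_rows hp (ltac:(lia) : (2 <= R <= p.-1)%N) ndv (ltac:(lia) : (1 <= D <= R)%N) Ep ok.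
  move=> [[hD hE]|[hD hE]].
    subst; split; last by split => //; lia.
    left; split; lia.
  subst D; split; last by split => //; lia.
  right; left.
  have [z [z0 hz]] := inU_int hU.
  have hz' : z * (R%:Z * (R%:Z - 1)) = (2 * E%:Z - (p%:Z - 1)) * (R%:Z * (R%:Z - 1)).
    rewrite hz; have -> : (R.-1)%:Z = R%:Z - 1 by lia. ring.
  have R0 : R%:Z * (R%:Z - 1) != 0 by apply/eqP; nia.
  move: hz' => /(mulIf R0) hz'.
  have hE' : (R%:Z * (p.-1 - E)%N%:Z <= p.-1%:Z) by lia.
  split; try lia.
move=> [hB [rp ndv]].
have [R ?] : exists R : nat, r = R%:Z by apply: natify; lia.
subst r.
move: ndv; rewrite pE => ndv.
have cop : coprime p R.
  rewrite prime_coprime //; apply/negP => /dvdn_leq; lia.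
have rp' : (2 <= R <= p.-1)%N by lia.
case: hB => [[/andP[r2 r3] he hd]|[[/andP[r2 r3] h1 h2 h3 hd]|[r2 h1 h2 h3 hd]]].
- subst; split; first by apply: inU_plus => //; lia.
  split; first by [].
  split; first by [].
  rewrite /polyXr1 pE /=.
  apply: det_Xr1_neq0 => //; try lia.
  apply: rows_iii => //; try lia.
- have [E ?] : exists E : nat, e = E%:Z by apply: natify; lia.
  subst e.
  subst d; split.
    by apply: inU_zero => //; lia.
  have -> : R%:Z - 1 = (R.-1)%:Z by lia.
  split; first by [].
  split; first by [].
  rewrite /polyXr1 /=.
  have Ep : (E <= p.-1)%N by lia.
  apply: det_Xr1_neq0 => //; try lia.
  apply: rows_iii => //; try lia.
  move=> _ I hI; rewrite Gauss_dvdl; last by rewrite coprime_sym.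
  apply/negP => /dvdn_leq; lia.
- exfalso; move: ndv; apply/negP/negPn.
  have [E ?] : exists E : nat, e = E%:Z by apply: natify; lia.
  subst e.
  have : (p.-1 = R * (p.-1 - E))%N.
    have : (p.-1)%:Z = (R * (p.-1 - E))%N%:Z.
      rewrite -pE -h3 PoszM; congr (_ * _); lia.
    by case.
  move=> E1; rewrite dvdzE /= E1; exact: dvdn_mulr (dvdnn R).
Qed.

Unset Implicit Arguments.

Theorem lemma6 (p : nat) (hp : prime p) :
  (forall r e d : int,
     (inU p r e d /\ (p%:Z %| r)%Z
      /\ \det (Mmat (polyXrX1 p r) (absz e) (absz d)) != 0)
     <-> (inB p r e d /\ (p%:Z %| r)%Z))
  /\
  (forall r e d : int,
     (inU p r e d /\ p%:Z < r /\ ~~ (p%:Z %| r)%Z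
      /\ \det (Mmat (polyXr1 p r) (absz e) (absz d)) != 0)
     <-> (inB p r e d /\ p%:Z < r /\ ~~ (p%:Z %| r)%Z))
  /\
  (forall r e d : int,
     (inU p r e d /\ 2 <= r <= p%:Z - 1 /\ ~~ (r %| p%:Z - 1)%Z
      /\ \det (Mmat (polyXr1 p r) (absz e) (absz d)) != 0)
     <-> (inB p r e d /\ 2 <= r <= p%:Z - 1 /\ ~~ (r %| p%:Z - 1)%Z)).

Proof.
split; first exact: part1.
split; first exact: part2.
exact: part3.
Qed.
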